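(* The poset $(\mathcal{D},\le)$ is a lattice.
   Context: A Dyck path of length $2m$ ($m\ge0$) is a lattice path from $(0,0)$ to $(2m,0)$ with steps $\nearrow=(1,1)$, $\searrow=(1,-1)$ never going below the $x$-axis; write $P(x)$ for its height at abscissa $x$. A cell is a point $(a,b)\in\mathbb{Z}^2$ with $b\ge0$, $a+b$ even (viewed as the tilted square with vertices $(a,b),(a+1,b\pm1),(a+2,b)$). The Dyck shape of $P$ (length $2m$) is $S(P)=\{(a,b): b\ge0,\ a+b\text{ even},\ 0\le a\le 2m-2,\ b+1\le P(a+1)\}$. Cells are adjacent if they differ by $(\pm1,\pm1)$. A ribbon is a nonempty set of cells, connected for adjacency, containing no four cells $(a,b),(a+1,b+1),(a+1,b-1),(a+2,b)$. For Dyck paths $D$ of length $2m$ and $E$ of length $2m+2$, $D\sqsubset E$ means $S(D)\subseteq S(E)$ and $S(E)\setminus S(D)$ is a ribbon. $(\mathcal{D},\le)$ is the set of all Dyck paths of all lengths (including the empty path) with $\le$ the reflexive and transitive closure of $\sqsubset$. *)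

(* Defs.v *)
From mathcomp Require Import all_boot all_order all_algebra.
From Stdlib Require Import Relation_Operators.
Set Implicit Arguments. Unset Strict Implicit. Unset Printing Implicit Defensive.
Import Order.TTheory GRing.Theory Num.Theory.
Local Open Scope ring_scope.

(* A lattice path is a sequence of steps: true = up (1,1), false = down (1,-1). *)
Definition step_val (s : bool) : int := if s then 1 else -1.

Definition height (P : seq bool) (x : nat) : int :=
  \sum_(i < x) step_val (nth false P i).

Definition is_dyck (P : seq bool) : Prop :=
  (forall x : nat, (x <= size P)%N -> 0 <= height P x) /\ height P (size P) = 0.

Definition cell := (int * int)%type.

Definition in_shape (P : seq bool) (c : cell) : Prop :=
  let: (a, b) := c in
  [/\ 0 <= b, (2 %| a + b)%Z, 0 <= a, a <= (size P)%:Z - 2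
    & b + 1 <= height P (absz a).+1].

Definition adjacent (c d : cell) : Prop :=
  (`|c.1 - d.1| = 1) /\ (`|c.2 - d.2| = 1).

Definition ribbon (R : cell -> Prop) : Prop :=
  [/\ (forall c, R c -> 0 <= c.2 /\ (2 %| c.1 + c.2)%Z),
      (exists c, R c),
      (forall c d, R c -> R d ->
         clos_refl_trans cell (fun x y => [/\ R x, R y & adjacent x y]) c d)
    & (forall a b, ~ [/\ R (a, b), R (a + 1, b + 1), R (a + 1, b - 1)
                        & R (a + 2, b)])].

Definition dcover (D E : seq bool) : Prop :=
  [/\ is_dyck D, is_dyck E, size E = (size D).+2,
      (forall c, in_shape D c -> in_shape E c)
    & ribbon (fun c => in_shape E c /\ ~ in_shape D c)].

Definition dle (D E : seq bool) : Prop := clos_refl_trans (seq bool) dcover D E.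

(* Main.v *)
Require Import Defs.
From mathcomp Require Import all_boot all_order all_algebra zify.
From Stdlib Require Import Relation_Operators.
Set Implicit Arguments. Unset Strict Implicit. Unset Printing Implicit Defensive.
Import Order.TTheory GRing.Theory Num.Theory.
Local Open Scope ring_scope.

Lemma height0 P : height P 0 = 0.
Proof. by rewrite /height big_ord0. Qed.

Lemma heightS P x : height P x.+1 = height P x + step_val (nth false P x).
Proof. by rewrite /height big_ord_recr. Qed.

Definition cntU (P : seq bool) (x : nat) : nat := \sum_(i < x) (nth false P i : nat).

Lemma heightE P x : height P x = (2 * cntU P x)%:Z - x%:Z.
Proof.
elim: x => [|x IH]; first by rewrite height0 /cntU big_ord0.
rewrite heightS IH /cntU big_ord_recr /= -/(cntU P x).
case: (nth false P x) => /=; lia.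
Qed.

Lemma hstep P x : height P x.+1 = height P x + 1 \/ height P x.+1 = height P x - 1.
Proof. rewrite heightS /step_val; case: (nth false P x); auto. Qed.

Lemma hstepT P x : nth false P x -> height P x.+1 = height P x + 1.
Proof. by rewrite heightS /step_val => ->. Qed.

Lemma hstepF P x : ~~ nth false P x -> height P x.+1 = height P x - 1.
Proof. by rewrite heightS /step_val => /negbTE ->. Qed.

Lemma height_beyond P x : (size P <= x)%N ->
  height P x = height P (size P) - (x - size P)%:Z.
Proof.
elim: x => [|x IH] h.
  have e : size P = 0%N by lia.
  rewrite e; lia.
case: (ltnP (size P) x.+1) => h2; last first.
  have e : size P = x.+1 by lia.
  rewrite e; lia.
rewrite hstepF; last by rewrite nth_default //; lia.
rewrite IH; last by lia.
lia.
Qed.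

Lemma height_ext P Q x : (forall i, (i < x)%N -> nth false P i = nth false Q i) ->
  height P x = height Q x.
Proof. by move=> h; apply: eq_bigr => i _; rewrite h. Qed.

Lemma height_mono P Q x : (forall i, (i < x)%N -> nth false P i -> nth false Q i) ->
  height P x <= height Q x.
Proof.
move=> h; apply: ler_sum => i _; rewrite /step_val.
have := h i (ltn_ord i).
by case: (nth false P i); case: (nth false Q i) => // /(_ isT).
Qed.

Lemma dyck_pos P x : is_dyck P -> (x <= size P)%N -> 0 <= height P x.
Proof. by case=> h _ /h. Qed.

Lemma dyck_end P : is_dyck P -> height P (size P) = 0.
Proof. by case. Qed.

Lemma dyck_beyond P x : is_dyck P -> (size P <= x)%N ->
  height P x = - (x - size P)%:Z.
Proof. by move=> dP h; rewrite height_beyond // dyck_end // sub0r. Qed.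

Lemma dvd2H P x (z : int) : (exists k : int, z = height P x + x%:Z + 2 * k) ->
  (2 %| z)%Z.
Proof.
case=> k ->; apply/dvdzP; exists ((cntU P x)%:Z + k); rewrite heightE; lia.
Qed.

Lemma exists_nat (a : int) : 0 <= a -> exists n : nat, a = n%:Z.
Proof. by move=> h; exists (absz a); rewrite gez0_abs. Qed.

Lemma norm_pm1 (z : int) : z = 1 \/ z = -1 -> `|z| = 1.
Proof. by case=> ->. Qed.

Lemma norm1_pm (z : int) : `|z| = 1 -> z = 1 \/ z = -1.
Proof. case: (ger0P z) => h; [|move/eqP; rewrite eqr_oppLR => /eqP]; auto. Qed.
Lemma height_le P x : height P x <= x%:Z.
Proof. elim: x => [|x IH]; first by rewrite height0. have := hstep P x; lia. Qed.

Lemma inS P n b : 0 <= b -> (2 %| n%:Z + b)%Z -> (n.+2 <= size P)%N ->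
  b + 1 <= height P n.+1 -> in_shape P (n%:Z, b).
Proof. move=> h1 h2 h3 h4; split => //=; lia. Qed.

Lemma inS_inv P n b : in_shape P (n%:Z, b) ->
  [/\ 0 <= b, (2 %| n%:Z + b)%Z, (n.+2 <= size P)%N & b + 1 <= height P n.+1].
Proof. case=> h1 h2 h3 h4 /= h5; split => //; lia. Qed.

Lemma notS P n b : height P n.+1 < b + 1 -> ~ in_shape P (n%:Z, b).
Proof. by move=> h /inS_inv [_ _ _]; lia. Qed.

Lemma notS2 P n b : (size P < n.+2)%N -> ~ in_shape P (n%:Z, b).
Proof. by move=> h /inS_inv [_ _]; lia. Qed.

Lemma conn_cols (R : cell -> Prop) c d :
  clos_refl_trans cell (fun x y => [/\ R x, R y & adjacent x y]) c d ->
  c = d \/ [/\ R c, R d & forall a, (c.1 <= a <= d.1) \/ (d.1 <= a <= c.1) ->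
                                  exists b, R (a, b)].
Proof.
elim=> [x y [Rx Ry [h1 _]]|x|x y z _ IH1 _ IH2].
- right; split=> // a ha. have := norm1_pm h1.
  case: x y Rx Ry h1 ha => [x1 x2] [y1 y2] /= Rx Ry _ ha hpm.
  have [e|e] : a = x1 \/ a = y1 by lia.
  + by exists x2; rewrite e.
  + by exists y2; rewrite e.
- by left.
- case: IH1 => [->|[Rx Ry H1]]; first exact: IH2.
  case: IH2 => [<-|[_ Rz H2]]; first by right.
  right; split=> // a ha.
  have [h|h] : ((x.1 <= a <= y.1) \/ (y.1 <= a <= x.1)) \/
               ((y.1 <= a <= z.1) \/ (z.1 <= a <= y.1)) by lia.
  + exact: H1.
  + exact: H2.
Qed.

Lemma cover_sub D E : dcover D E -> forall i, nth false D i -> nth false E i.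
Proof.
case=> dD dE sE incl [_ _ conn nodia].
have hE0 x : (x <= size E)%N -> 0 <= height E x by move=> h; apply: dyck_pos.
have hD0 x : (x <= size D)%N -> 0 <= height D x by move=> h; apply: dyck_pos.
have Dend := dyck_end dD.
have Eend := dyck_end dE.
have hDE x : (x <= size D)%N -> height D x <= height E x.
  move=> xm.
  have := hE0 x (ltac:(rewrite sE; lia)).
  have := hD0 x xm.
  case: x xm => [|y] ym h1 h2; first by rewrite !height0.
  case: (lerP (height D y.+1) 0) => hd; first lia.
  have ys : (y.+1 < size D)%N.
    case: (ltnP y.+1 (size D)) => // hh.
    have e : y.+1 = size D by lia.
    by move: hd; rewrite e Dend.
  have: in_shape D (y%:Z, height D y.+1 - 1).
    have hh := heightE D y.+1.
    apply: inS; try lia.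
  by move/incl/inS_inv => [_ _ _]; lia.
have hED x : (x <= size D)%N -> height E x <= height D x + 2.
  move=> xm; rewrite leNgt; apply/negP => hlt.
  have := heightE D x; have := heightE E x; have := height_le E x.
  have := hD0 x xm.
  case: x xm hlt => [|[|y]] xm hlt p1 p2 p3 p4; try lia.
  have := hstep D y.+1; have := hstep D y.+2.
  have := hstep E y.+1; have := hstep E y.+2 => q1 q2 q3 q4.
  set d := height D y.+2.
  have e1 : y%:Z + 1 = (y.+1)%:Z by lia.
  have e2 : y%:Z + 2 = (y.+2)%:Z by lia.
  apply: (nodia (y%:Z) (d + 2)); rewrite e1 e2; split; split.
  - apply: inS; try lia.
  - apply: notS; lia.
  - apply: inS; try lia.
  - apply: notS; lia.
  - apply: inS; try lia.
  - apply: notS; lia.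
  - apply: inS; try lia.
  - apply: notS; lia.
have hmono x : (0 < x)%N -> (x < size D)%N -> height D x < height E x ->
    height D x.+1 < height E x.+1.
  case: x => [|y] // _ ys hlt.
  have := heightE D y.+1; have := heightE E y.+1 => p1 p2.
  have Rc : in_shape E (y%:Z, height D y.+1 + 1) /\
            ~ in_shape D (y%:Z, height D y.+1 + 1).
    split; last by apply: notS; lia.
    have hh := hD0 y.+1 (ltac:(lia)).
    apply: inS; try lia.
  have Re : in_shape E ((size D)%:Z, 0) /\ ~ in_shape D ((size D)%:Z, 0).
    split; last by apply: notS2; lia.
    have hh := heightE D (size D).
    apply: inS; try lia.
    have := hstep E (size D).+1; have := hE0 (size D).+1 (ltac:(lia)).
      rewrite -sE Eend; lia.
  have [e|[_ _ H]] := conn_cols (conn _ _ Rc Re).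
    by case: e => e; lia.
  have [b [hin hnot]] := H (y.+1)%:Z (ltac:(rewrite /=; lia)).
  have [b0 par s3 hb] := inS_inv hin.
  rewrite ltNge; apply/negP => hle.
  case: (ltnP y.+2 (size D)) => hs.
    by apply: hnot; apply: inS => //; lia.
  have e : y.+2 = size D by lia.
  move: hle hb; rewrite e Dend; lia.
move=> i hDi; case hEi: (nth false E i) => //.
have il : (i < size D)%N.
  by case: (ltnP i (size D)) => // h; rewrite nth_default in hDi.
have s1 := hstepT hDi; have s2 := hstepF (negbT hEi).
have := hDE i (ltnW il); have := hDE i.+1 il; have := hED i (ltnW il).
case: (ltrP (height D i) (height E i)) => hl a1 a2 a3.
  case: i il hDi hEi s1 s2 hl a1 a2 a3 => [|i] il _ _ s1 s2 hl a1 a2 a3.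
    by move: hl; rewrite !height0.
  have := hmono i.+1 isT il hl; lia.
lia.
Qed.

Definition addU (D : seq bool) (p : nat) : seq bool :=
  mkseq (fun i => nth false D i || (i == p)) (size D).+2.

Lemma size_addU D p : size (addU D p) = (size D).+2.
Proof. by rewrite size_mkseq. Qed.

Lemma nth_addU D p i : (p <= size D)%N ->
  nth false (addU D p) i = nth false D i || (i == p).
Proof.
move=> hp; case: (ltnP i (size D).+2) => h; first by rewrite nth_mkseq.
rewrite !nth_default ?size_mkseq //; last lia.
by have -> : (i == p) = false by apply/eqP; lia.
Qed.

Lemma height_addU D p x : (p <= size D)%N -> ~~ nth false D p ->
  height (addU D p) x = height D x + (if (p < x)%N then 2 else 0).
Proof.
move=> hp hn; elim: x => [|x IH]; first by rewrite !height0.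
rewrite !heightS IH nth_addU //.
case: (ltngtP x p) => h.
- have -> : (p < x.+1)%N = false by apply/negbTE; lia.
  by rewrite orbF; lia.
- have -> : (p < x.+1)%N = true by lia.
  by rewrite orbF; lia.
- subst x; rewrite ltnSn orbT (negbTE hn) /step_val; lia.
Qed.

Lemma dyck_addU D p : is_dyck D -> (p <= size D)%N -> ~~ nth false D p ->
  is_dyck (addU D p).
Proof.
move=> dD hp hn; split; rewrite size_addU.
- move=> x hx; rewrite height_addU //.
  case: (leqP x (size D)) => h.
    have := dyck_pos dD h; case: ifP => _; lia.
  rewrite dyck_beyond //; last lia.
  case: ifP => hpx; lia.
- rewrite height_addU // dyck_beyond //; last lia.
  case: ifP => hpx; lia.
Qed.

Lemma adjacent_sym c d : adjacent c d -> adjacent d c.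
Proof. by case=> h1 h2; split; rewrite distrC. Qed.

Lemma cover_addU D p : is_dyck D -> (p <= size D)%N -> ~~ nth false D p ->
  dcover D (addU D p).
Proof.
move=> dD hp hn.
have dD' := dyck_addU dD hp hn.
have hD0 x : (x <= size D)%N -> 0 <= height D x by move=> h; apply: dyck_pos.
have Dend := dyck_end dD.
have hbey x : (size D <= x)%N -> height D x = - (x - size D)%:Z by apply: dyck_beyond.
set D' := addU D p.
have hD' x : height D' x = height D x + (if (p < x)%N then 2 else 0)
  by apply: height_addU.
have sD' : size D' = (size D).+2 by apply: size_addU.
split => //.
  case=> a b hin; have [n en] := exists_nat (let: And5 _ _ h _ _ := hin in h).
  subst a; have [b0 par s1 hb] := inS_inv hin.
  apply: inS => //; first lia.
  rewrite hD'; case: ifP => _; lia.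
set R := fun c => in_shape D' c /\ ~ in_shape D c.
have Rchar a b : R (a, b) -> exists n : nat,
    [/\ a = n%:Z, (p <= n)%N, (n <= size D)%N & b = height D n.+1 + 1].
  case=> hin hnot; have [n en] := exists_nat (let: And5 _ _ h _ _ := hin in h).
  subst a; have [b0 par s1 hb] := inS_inv hin.
  move: hb; rewrite hD' => hb.
  have hE := heightE D n.+1.
  have hlow : height D n.+1 < b + 1.
    case: (ltnP n.+1 (size D)) => hs.
      rewrite ltNge; apply/negP => hle; apply: hnot; apply: inS => //.
    rewrite hbey //; lia.
  exists n; split => //.
  - rewrite leqNgt; apply/negP => hpn.
    move: hb; have -> : (p < n.+1)%N = false by apply/negbTE; lia.
    lia.
  - rewrite sD' in s1; lia.
  - move: hb; case: ifP => _ hb; lia.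
have Rintro n : (p <= n)%N -> (n <= size D)%N -> R (n%:Z, height D n.+1 + 1).
  move=> h1 h2; have hE := heightE D n.+1.
  split; last by apply: notS; lia.
  have hb : -1 <= height D n.+1.
    case: (ltnP n (size D)) => hs; first by have := hD0 n.+1 hs; lia.
    rewrite hbey; lia.
  apply: inS; try lia.
  rewrite hD'; have -> : (p < n.+1)%N = true by lia.
  lia.
set cl := fun n : nat => (n%:Z, height D n.+1 + 1).
have adjS n : adjacent (cl n) (cl n.+1).
  split; rewrite /cl /=; apply: norm_pm1; first lia.
  have := hstep D n.+1; lia.
have chain k : forall n, (p <= n)%N -> (n + k <= size D)%N ->
    clos_refl_trans cell (fun x y => [/\ R x, R y & adjacent x y]) (cl n) (cl (n + k)%N) /\
    clos_refl_trans cell (fun x y => [/\ R x, R y & adjacent x y]) (cl (n + k)%N) (cl n).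
  elim: k => [|k IH] n h1 h2; first by rewrite addn0; split; apply: rt_refl.
  have [IH1 IH2] := IH n.+1 (ltac:(lia)) (ltac:(lia)).
  rewrite -addSnnS; split.
  - apply: rt_trans IH1; apply: rt_step; split; try apply: Rintro; try lia.
    exact: adjS.
  - apply: rt_trans IH2 _; apply: rt_step; split; try apply: Rintro; try lia.
    exact: adjacent_sym (adjS n).
split.
- by case=> a b [[h1 h2 _ _ _] _].
- exists ((size D)%:Z, height D (size D).+1 + 1); exact: Rintro.
- case=> a b [a' b'] Rc Rd.
  have [n [en h1 h2 eb]] := Rchar _ _ Rc.
  have [n' [en' h1' h2' eb']] := Rchar _ _ Rd.
  subst a b a' b'.
  case: (leqP n n') => hnn.
    have := (chain (n' - n)%N n h1 (ltac:(lia))).1.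
    by rewrite subnKC.
  have := (chain (n - n')%N n' h1' (ltac:(lia))).2.
  by rewrite subnKC //; lia.
- move=> a b [_ R2 R3 _].
  have [n [en _ _ eb]] := Rchar _ _ R2.
  have [n' [en' _ _ eb']] := Rchar _ _ R3.
  have e : n = n' by lia.
  subst n'; lia.
Qed.

Lemma nth_true_size (P : seq bool) i : nth false P i -> (i < size P)%N.
Proof. by case: (ltnP i (size P)) => // h; rewrite nth_default. Qed.

Lemma first_le_size D L p : is_dyck D -> is_dyck L -> nth false L p ->
  (forall i, (i < p)%N -> nth false L i -> nth false D i) -> (p <= size D)%N.
Proof.
move=> dD dL hp hsub; rewrite leqNgt; apply/negP => hlt.
have h1 := height_mono hsub.
have h2 := dyck_beyond dD (ltnW hlt).
have h3 := dyck_pos dL (ltnW (nth_true_size hp)).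
lia.
Qed.

Lemma dyck_eq J E : is_dyck J -> is_dyck E ->
  (forall i, nth false J i = nth false E i) -> J = E.
Proof.
move=> dJ dE h.
have hh x : height J x = height E x by apply: height_ext => i _; exact: h.
have le1 : (size J <= size E)%N.
  rewrite leqNgt; apply/negP => hlt.
  have := dyck_beyond dE (leqnSn (size E)).
  have := dyck_pos dJ hlt; rewrite hh; lia.
have le2 : (size E <= size J)%N.
  rewrite leqNgt; apply/negP => hlt.
  have := dyck_beyond dJ (leqnSn (size J)).
  have := dyck_pos dE hlt; rewrite -hh; lia.
apply: (eq_from_nth (x0 := false)); first by apply/eqP; rewrite eqn_leq le1 le2.
by move=> i _; exact: h.
Qed.

Lemma dle_sub D E : dle D E -> is_dyck D ->
  is_dyck E /\ forall i, nth false D i -> nth false E i.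
Proof.
elim=> [x y hc|x|x y z _ IH1 _ IH2] dx.
- split; first by case: hc.
  exact: cover_sub.
- by split.
- have [dy s1] := IH1 dx; have [dz s2] := IH2 dy.
  by split => // i /s1 /s2.
Qed.

Lemma dle_size D E : dle D E -> D = E \/ (size D < size E)%N.
Proof.
elim=> [x y [_ _ s _ _]|x|x y z _ IH1 _ IH2].
- by right; rewrite s.
- by left.
- case: IH1 => [->|h1] //; case: IH2 => [<-|h2]; [by right| right; lia].
Qed.

Lemma join_ex E D : is_dyck E -> is_dyck D -> exists J,
  [/\ is_dyck J, dle D J & forall i, nth false J i = nth false D i || nth false E i].
Proof.
move=> dE.
suff: forall n k D, (k + n = size E)%N -> is_dyck D ->
   (forall i, (i < k)%N -> nth false E i -> nth false D i) -> exists J,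
  [/\ is_dyck J, dle D J & forall i, nth false J i = nth false D i || nth false E i].
  by move=> H dD; apply: (H (size E) 0%N D) => //.
elim=> [|n IH] k D0 hk dD hsub.
  exists D0; split => //; first exact: rt_refl.
  move=> i; case hEi: (nth false E i); last by rewrite orbF.
  by rewrite (hsub i) //; have := nth_true_size hEi; lia.
case hb: (nth false E k && ~~ nth false D0 k).
  move/andP: hb => [hEk hDk].
  have hp : (k <= size D0)%N by apply: (first_le_size dD dE hEk hsub).
  have [J [dJ hle hJ]] := IH k.+1 (addU D0 k) (ltac:(lia)) (dyck_addU dD hp hDk)
    (fun i hi hEi => ltac:(rewrite nth_addU //; case: (ltngtP i k) => hik;
       [by rewrite (hsub i hik hEi)| lia | by rewrite orbT])).
  exists J; split => //.
    by apply: rt_trans hle; apply: rt_step; apply: cover_addU.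
  move=> i; rewrite hJ nth_addU //.
  case: (eqVneq i k) => [->|_]; first by rewrite hEk !orbT.
  by rewrite orbF.
have [J [dJ hle hJ]] := IH k.+1 D0 (ltac:(lia)) dD
  (fun i hi hEi => ltac:(case: (ltngtP i k) => hik;
     [exact: (hsub i hik hEi) | lia | subst i; move: hb; rewrite hEi /=; by case: (nth false D0 k)])).
by exists J.
Qed.

Lemma sub_dle D E : is_dyck D -> is_dyck E ->
  (forall i, nth false D i -> nth false E i) -> dle D E.
Proof.
move=> dD dE hs.
have [J [dJ hle hJ]] := join_ex dE dD.
have -> : E = J.
  apply: dyck_eq => // i; rewrite hJ.
  by case hDi: (nth false D i) => //=; rewrite (hs i hDi).
exact: hle.
Qed.

Lemma dyck_nil : is_dyck [::].
Proof.
split; last by rewrite height0.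
by move=> x; rewrite leqn0 => /eqP ->; rewrite height0.
Qed.

Lemma meet_ex D E : is_dyck D -> is_dyck E -> exists M,
  [/\ is_dyck M, (forall i, nth false M i -> nth false D i && nth false E i) &
      forall L, is_dyck L -> (forall i, nth false L i -> nth false D i && nth false E i) ->
        forall i, nth false L i -> nth false M i].
Proof.
move=> dD dE.
pose C i := nth false D i && nth false E i.
suff: forall n k M, (k + n = size D)%N -> is_dyck M ->
   (forall i, nth false M i -> (i < k)%N) ->
   (forall i, nth false M i -> C i) ->
   (forall L, is_dyck L -> (forall i, nth false L i -> C i) ->
        forall i, (i < k)%N -> nth false L i -> nth false M i) ->
   exists M,
  [/\ is_dyck M, (forall i, nth false M i -> C i) &
      forall L, is_dyck L -> (forall i, nth false L i -> C i) ->
        forall i, nth false L i -> nth false M i].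
  move=> H; apply: (H (size D) 0%N [::]) => //; first exact: dyck_nil.
  - by move=> i; rewrite nth_nil.
  - by move=> i; rewrite nth_nil.
elim=> [|n IH] k M hk dM hlt hC hL.
  exists M; split => // L dL hLC i hLi.
  apply: (hL L dL hLC i) => //.
  have := hLC i hLi; rewrite /C => /andP [/nth_true_size]; lia.
case hc: (C k && (k <= size M)%N).
  move/andP: hc => [hCk hkM].
  have hMk : ~~ nth false M k.
    by apply/negP => /hlt; rewrite ltnn.
  apply: (IH k.+1 (addU M k)) => //.
  - lia.
  - exact: dyck_addU.
  - by move=> i; rewrite nth_addU // => /orP [/hlt|/eqP ->]; lia.
  - by move=> i; rewrite nth_addU // => /orP [/hC|/eqP ->].
  - move=> L dL hLC i hi hLi; rewrite nth_addU //.
    case: (ltngtP i k) => hik; [by rewrite (hL L dL hLC i hik hLi)| lia | by rewrite orbT].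
apply: (IH k.+1 M) => //.
- lia.
- by move=> i /hlt; lia.
- move=> L dL hLC i hi hLi.
  case: (ltngtP i k) => hik; [exact: (hL L dL hLC i hik hLi)| lia|].
  subst i; exfalso.
  have hkM : (k <= size M)%N.
    by apply: (first_le_size dM dL hLi) => j hj; apply: (hL L dL hLC j hj).
  by move: hc; rewrite (hLC k hLi) hkM.
Qed.

Theorem mainTheorem5 :
  (forall D E : seq bool, is_dyck D -> is_dyck E -> dle D E -> dle E D -> D = E) /\
  (forall D E : seq bool, is_dyck D -> is_dyck E ->
     (exists J, [/\ is_dyck J, dle D J, dle E J &
        forall U, is_dyck U -> dle D U -> dle E U -> dle J U]) /\
     (exists M, [/\ is_dyck M, dle M D, dle M E &
        forall L, is_dyck L -> dle L D -> dle L E -> dle L M])).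
Proof.
split.
  move=> D E _ _ h1 h2.
  case: (dle_size h1) => // l1; case: (dle_size h2) => [e|l2] //; lia.
move=> D E dD dE; split.
  have [J [dJ hle hJ]] := join_ex dE dD.
  exists J; split => //.
    by apply: sub_dle => // i hi; rewrite hJ hi orbT.
  move=> U dU hDU hEU.
  have [_ s1] := dle_sub hDU dD; have [_ s2] := dle_sub hEU dE.
  by apply: sub_dle => // i; rewrite hJ => /orP [/s1|/s2].
have [M [dM hMC hML]] := meet_ex dD dE.
exists M; split => //.
- by apply: sub_dle => // i /hMC /andP [].
- by apply: sub_dle => // i /hMC /andP [].
- move=> L dL hLD hLE.
  have [_ s1] := dle_sub hLD dL; have [_ s2] := dle_sub hLE dL.
  apply: sub_dle => //; apply: hML => // i hi.
  by rewrite (s1 i hi) (s2 i hi).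
Qed.
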